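(* Let $\kappa$ be an uncountable cardinal with $\kappa=\kappa^{<\kappa}$. Then there is a continuous injective function $f:{}^\kappa\kappa\to{}^\kappa\kappa$ whose range is not a $\kappa$-Borel subset of ${}^\kappa\kappa$.
   Context: ${}^\kappa\kappa$ is the set of functions $\kappa\to\kappa$, with the topology whose basic open sets are $N_s=\{x\in{}^\kappa\kappa : s\subseteq x\}$ for $s$ a function from some ordinal $\alpha<\kappa$ to $\kappa$. A subset of ${}^\kappa\kappa$ is $\kappa$-Borel if it belongs to the smallest algebra of subsets of ${}^\kappa\kappa$ that contains all open sets and is closed under unions of $\kappa$ many sets (and complements). *)

(* Defs.v *)
(* The cardinal kappa is represented by a type K carrying a
   strict well-order lt whose order type is an initial ordinal (a cardinal):
   no proper initial segment has cardinality |K|. *)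
From Stdlib Require Import Classical.

Set Implicit Arguments.

Section GeneralizedBaire.
Variables (K : Type) (lt : K -> K -> Prop).

Definition strict_well_order : Prop :=
  (forall a, ~ lt a a) /\
  (forall a b c, lt a b -> lt b c -> lt a c) /\
  (forall a b, lt a b \/ a = b \/ lt b a) /\
  well_founded lt.

Definition seg (a : K) : Type := { b : K | lt b a }.

Definition is_cardinal : Prop :=
  strict_well_order /\
  forall a : K, ~ exists f : K -> seg a, forall x y, f x = f y -> x = y.

Definition uncountable : Prop :=
  ~ exists f : K -> nat, forall x y, f x = f y -> x = y.

(* kappa^{<kappa} <= kappa: the set of all functions alpha -> kappa,
   alpha < kappa, injects into kappa (the reverse inequality is trivial). *)
Definition kappa_lt_kappa_eq_kappa : Prop :=
  exists f : { a : K & seg a -> K } -> K, forall x y, f x = f y -> x = y.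

Definition baire := K -> K.

Definition N (a : K) (s : seg a -> K) : baire -> Prop :=
  fun x => forall (b : K) (h : lt b a), x b = s (exist _ b h).

Definition kopen (U : baire -> Prop) : Prop :=
  forall x, U x -> exists (a : K) (s : seg a -> K),
    N s x /\ (forall y, N s y -> U y).

Inductive kBorel : (baire -> Prop) -> Prop :=
| kBorel_open : forall U, kopen U -> kBorel U
| kBorel_compl : forall A, kBorel A -> kBorel (fun x => ~ A x)
| kBorel_union : forall F : K -> (baire -> Prop),
    (forall i, kBorel (F i)) -> kBorel (fun x => exists i, F i x).

Definition kcontinuous (f : baire -> baire) : Prop :=
  forall U, kopen U -> kopen (fun x => U (f x)).

End GeneralizedBaire.

(* Main.v *)
From Stdlib Require Import Classical ClassicalEpsilon FunctionalExtensionality Eqdep List PeanoNat Lia.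
Require Import Defs.
Import ListNotations.

Section Main.
Variables (K : Type) (lt : K -> K -> Prop).
Hypothesis Hirr : forall a, ~ lt a a.
Hypothesis Htr : forall a b c, lt a b -> lt b c -> lt a c.
Hypothesis Htri : forall a b, lt a b \/ a = b \/ lt b a.
Hypothesis Hwf : well_founded lt.
Hypothesis Hcard : forall a : K, ~ exists f : K -> seg lt a, forall x y, f x = f y -> x = y.
Hypothesis Hunc : ~ exists f : K -> nat, forall x y, f x = f y -> x = y.
Variable e : { a : K & seg lt a -> K } -> K.
Hypothesis He : forall x y, e x = e y -> x = y.

Definition emi := excluded_middle_informative.

Lemma inhK : inhabited K.
Proof.
  destruct (classic (inhabited K)) as [h|h]; auto.
  exfalso; apply Hunc. exists (fun x => 0). intros x; exfalso; apply h; constructor; exact x.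
Qed.

Lemma kmin : forall P : K -> Prop, (exists x, P x) -> exists m, P m /\ forall y, P y -> ~ lt y m.
Proof.
  intros P [x Hx]. apply NNPP; intro Hn.
  assert (forall z, ~ P z).
  { intro z. induction (Hwf z) as [z _ IH]. intro Pz. apply Hn. exists z. split; [exact Pz|].
    intros y Py Hy. exact (IH y Hy Py). }
  exact (H x Hx).
Qed.

Lemma nat_min : forall P : nat -> Prop, (exists n, P n) -> exists m, P m /\ forall k, k < m -> ~ P k.
Proof.
  intros P [n Hn]. apply NNPP; intro Hneg.
  assert (forall z, ~ P z).
  { intro z. induction z as [z IH] using (well_founded_induction Nat.lt_wf_0).
    intro Pz. apply Hneg. exists z. split; [exact Pz|]. intros k Hk Pk. exact (IH k Hk Pk). }
  exact (H n Hn).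
Qed.

Definition le a b := lt a b \/ a = b.

Lemma not_lt_le : forall a b, ~ lt a b -> le b a.
Proof. intros a b H. destruct (Htri a b) as [h|[h|h]]; unfold le; auto; tauto. Qed.

Definition nxt (x : K) : K := epsilon inhK (fun y => lt x y /\ forall z, lt x z -> ~ lt z y).

Lemma nxt_spec : forall x, (exists y, lt x y) -> lt x (nxt x) /\ forall z, lt x z -> ~ lt z (nxt x).
Proof.
  intros x Hx. unfold nxt. apply epsilon_spec.
  destruct (kmin (fun y => lt x y) Hx) as [m [Hm Hmin]]. exists m; split; auto.
Qed.

Definition m0 : K := epsilon inhK (fun m => forall y, ~ lt y m).
Lemma m0_spec : forall y, ~ lt y m0.
Proof.
  unfold m0. apply (epsilon_spec inhK (fun m => forall y, ~ lt y m)).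
  destruct inhK as [k]. destruct (kmin (fun _ => True)) as [m [_ Hm]]. exists k; auto.
  exists m. intros y; apply Hm; auto.
Qed.

Fixpoint fin (n : nat) : K := match n with 0 => m0 | S n => nxt (fin n) end.

Lemma seg_fin : forall n, (forall k, k < n -> lt (fin k) (fin (S k))) ->
  forall b, lt b (fin n) -> exists m, m < n /\ b = fin m.
Proof.
  induction n; intros Hinc b Hb.
  - exfalso; exact (m0_spec b Hb).
  - assert (Hn : lt (fin n) (fin (S n))) by (apply Hinc; lia).
    destruct (Htri b (fin n)) as [h|[h|h]].
    + destruct (IHn (fun k hk => Hinc k ltac:(lia)) b h) as [m [Hm1 Hm2]]. exists m; split; auto; lia.
    + exists n; split; auto.
    + exfalso. simpl in Hb. destruct (nxt_spec (fin n)) as [_ H2]. exists (fin (S n)); auto.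
      exact (H2 b h Hb).
Qed.

Lemma fin_mono_gen : (forall k, lt (fin k) (fin (S k))) -> forall k m, k < m -> lt (fin k) (fin m).
Proof.
  intros Hinc k m Hkm. induction Hkm.
  - apply Hinc.
  - eapply Htr; eauto.
Qed.

Lemma noMax : forall a, exists b, lt a b.
Proof.
  intro a. apply NNPP; intro Ha.
  assert (Hmax : forall b, ~ lt a b) by (intros b hb; apply Ha; exists b; auto).
  destruct (classic (exists n, ~ lt (fin n) (fin (S n)))) as [[n0 Hn0]|Hall].
  - destruct (nat_min (fun n => ~ lt (fin n) (fin (S n))) (ex_intro _ n0 Hn0)) as [n [Hn Hmin]].
    assert (Hinc : forall k, k < n -> lt (fin k) (fin (S k))).
    { intros k hk. apply NNPP. apply Hmin; auto. }
    assert (Hno : ~ exists y, lt (fin n) y).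
    { intro hy. apply Hn. apply (nxt_spec _ hy). }
    assert (Hall : forall y, exists m, y = fin m).
    { intro y. destruct (Htri y (fin n)) as [h|[h|h]].
      - destruct (seg_fin n Hinc y h) as [m [_ Hm]]; eauto.
      - eauto.
      - exfalso; apply Hno; eauto. }
    apply Hunc. exists (fun y => epsilon (inhabits 0) (fun m => y = fin m)).
    intros x y Hxy.
    rewrite (epsilon_spec (inhabits 0) (fun m => x = fin m) (Hall x)).
    rewrite (epsilon_spec (inhabits 0) (fun m => y = fin m) (Hall y)).
    rewrite Hxy; auto.
  - assert (Hinc : forall k, lt (fin k) (fin (S k))) by (intro k; apply NNPP; intro; apply Hall; eauto).
    assert (Hfinj : forall k m, fin k = fin m -> k = m).
    { intros k m H. destruct (Nat.lt_trichotomy k m) as [h|[h|h]]; auto.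
      - exfalso. pose proof (fin_mono_gen Hinc k m h). rewrite H in H0. eapply Hirr; eauto.
      - exfalso. pose proof (fin_mono_gen Hinc m k h). rewrite H in H0. eapply Hirr; eauto. }
    assert (Hna : forall n, fin n <> a).
    { intros n hn. apply (Hmax (fin (S n))). rewrite <- hn. apply Hinc. }
    assert (Hbelow : forall y, y <> a -> lt y a).
    { intros y hy. destruct (Htri y a) as [h|[h|h]]; auto; try tauto. exfalso; exact (Hmax y h). }
    set (g0 := fun y => if emi (y = a) then fin 0 else
                 if emi (exists n, y = fin n) then fin (S (epsilon (inhabits 0) (fun n => y = fin n))) else y).
    assert (Hg0 : forall y, lt (g0 y) a).
    { intro y. apply Hbelow. unfold g0. destruct (emi (y = a)); auto.
      destruct (emi (exists n, y = fin n)); auto. }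
    apply (Hcard a). exists (fun y => exist _ (g0 y) (Hg0 y)).
    intros x y Hxy. apply (f_equal (@proj1_sig _ _)) in Hxy. cbn [proj1_sig] in Hxy.
    unfold g0 in Hxy.
    destruct (emi (x = a)) as [hx|hx]; destruct (emi (y = a)) as [hy|hy]; try congruence;
    destruct (emi (exists n, x = fin n)) as [hx2|hx2]; destruct (emi (exists n, y = fin n)) as [hy2|hy2];
    try (pose proof (epsilon_spec (inhabits 0) _ hx2) as ex);
    try (pose proof (epsilon_spec (inhabits 0) _ hy2) as ey).
    all: try (exfalso; apply hy2; eauto; fail); try (exfalso; apply hx2; eauto; fail).
    all: try (exfalso; apply hx2; exists 0; auto; fail).
    all: try (exfalso; apply hy2; exists 0; auto; fail).
    all: try (apply Hfinj in Hxy; first [discriminate | injection Hxy as Hxy; rewrite ex, ey, Hxy; reflexivity]).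
    all: auto.
Qed.

Lemma fin_inc : forall k, lt (fin k) (fin (S k)).
Proof. intro k. apply (nxt_spec (fin k) (noMax (fin k))). Qed.

Lemma fin_mono : forall k m, k < m -> lt (fin k) (fin m).
Proof. apply fin_mono_gen, fin_inc. Qed.

Lemma fin_inj : forall k m, fin k = fin m -> k = m.
Proof.
  intros k m H. destruct (Nat.lt_trichotomy k m) as [h|[h|h]]; auto.
  - exfalso. pose proof (fin_mono k m h). rewrite H in H0. eapply Hirr; eauto.
  - exfalso. pose proof (fin_mono m k h). rewrite H in H0. eapply Hirr; eauto.
Qed.

Lemma seg_fin' : forall n b, lt b (fin n) -> exists m, m < n /\ b = fin m.
Proof. intros n. apply seg_fin. intros; apply fin_inc. Qed.

Lemma fin_bounded : exists b, forall n, lt (fin n) b.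
Proof.
  apply NNPP; intro H.
  assert (Hall : forall y, exists m, y = fin m).
  { intro y. apply NNPP; intro Hy. apply H. exists y. intro n.
    destruct (Htri (fin n) y) as [h|[h|h]]; auto.
    - exfalso; apply Hy; eauto.
    - exfalso. destruct (seg_fin' n y h) as [m [_ hm]]. apply Hy; eauto. }
  apply Hunc. exists (fun y => epsilon (inhabits 0) (fun m => y = fin m)).
  intros x y Hxy.
  rewrite (epsilon_spec (inhabits 0) (fun m => x = fin m) (Hall x)).
  rewrite (epsilon_spec (inhabits 0) (fun m => y = fin m) (Hall y)).
  rewrite Hxy; auto.
Qed.

Definition omK : K := epsilon inhK (fun b => (forall n, lt (fin n) b) /\ forall c, (forall n, lt (fin n) c) -> ~ lt c b).

Lemma omK_spec : (forall n, lt (fin n) omK) /\ forall c, (forall n, lt (fin n) c) -> ~ lt c omK.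
Proof.
  unfold omK. apply epsilon_spec. destruct (kmin _ fin_bounded) as [m [H1 H2]]. exists m; auto.
Qed.

Lemma seg_omK : forall b, lt b omK -> exists n, b = fin n.
Proof.
  intros b Hb. destruct omK_spec as [_ H2].
  assert (~ forall n, lt (fin n) b) by (intro h; exact (H2 b h Hb)).
  apply not_all_ex_not in H. destruct H as [n Hn].
  destruct (Htri (fin n) b) as [h|[h|h]]; [tauto| eauto |].
  destruct (seg_fin' n b h) as [m [_ hm]]; eauto.
Qed.

Definition idx (b : K) : nat := epsilon (inhabits 0) (fun n => b = fin n).

Lemma idx_fin : forall n, idx (fin n) = n.
Proof.
  intro n. unfold idx. apply fin_inj. symmetry.
  apply (epsilon_spec (inhabits 0) (fun m => fin n = fin m)). eauto.
Qed.

Definition Phi (f : nat -> K) : K := e (existT _ omK (fun s : seg lt omK => f (idx (proj1_sig s)))).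

Lemma Phi_inj : forall f g, Phi f = Phi g -> f = g.
Proof.
  intros f g H. apply He in H. apply inj_pairT2 in H.
  extensionality n. assert (hn : lt (fin n) omK) by apply omK_spec.
  pose proof (f_equal (fun h => h (exist _ (fin n) hn)) H) as H'. cbn beta in H'.
  cbn [proj1_sig] in H'. rewrite idx_fin in H'. exact H'.
Qed.

Lemma cof_omega : forall s : nat -> K, exists b, forall n, lt (s n) b.
Proof.
  intro s. apply NNPP; intro H.
  assert (H' : forall b, exists n, le b (s n)).
  { intro b. apply NNPP; intro hb. apply H. exists b. intro n. apply NNPP; intro hn.
    apply hb. exists n. apply not_lt_le; auto. }
  set (G := fun xi => epsilon (inhabits (fun _ : nat => xi)) (fun f => Phi f = xi)).
  assert (Hv : forall n, exists v, forall xi, le xi (s n) -> G xi n <> v).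
  { intro n. apply NNPP; intro hv.
    assert (hs : forall v, exists xi, le xi (s n) /\ G xi n = v).
    { intro v. apply NNPP; intro h. apply hv. exists v. intros xi hxi hG. apply h; eauto. }
    destruct (nxt_spec (s n) (noMax (s n))) as [hnx _].
    set (ch := fun v => epsilon (inhabits (s n)) (fun xi => le xi (s n) /\ G xi n = v)).
    assert (hch : forall v, le (ch v) (s n) /\ G (ch v) n = v).
    { intro v. apply (epsilon_spec (inhabits (s n)) (fun xi => le xi (s n) /\ G xi n = v)). apply hs. }
    assert (hlt : forall v, lt (ch v) (nxt (s n))).
    { intro v. destruct (proj1 (hch v)) as [h|h]. eapply Htr; eauto. rewrite h; auto. }
    apply (Hcard (nxt (s n))). exists (fun v => exist _ (ch v) (hlt v)).
    intros x y hxy. apply (f_equal (@proj1_sig _ _)) in hxy. cbn [proj1_sig] in hxy.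
    rewrite <- (proj2 (hch x)), <- (proj2 (hch y)), hxy. reflexivity. }
  set (g := fun n => epsilon inhK (fun v => forall xi, le xi (s n) -> G xi n <> v)).
  assert (hg : forall n xi, le xi (s n) -> G xi n <> g n).
  { intros n. apply (epsilon_spec inhK (fun v => forall xi, le xi (s n) -> G xi n <> v)). apply Hv. }
  destruct (H' (Phi g)) as [n hn].
  assert (HG : G (Phi g) = g).
  { apply Phi_inj. unfold G. apply (epsilon_spec _ (fun f => Phi f = Phi g)). eauto. }
  apply (hg n (Phi g) hn). rewrite HG. reflexivity.
Qed.

Lemma bound_list : forall (a : K) (S : list K), exists al, lt a al /\ forall x, In x S -> lt x al.
Proof.
  intros a S. induction S as [|x S IH].
  - destruct (noMax a) as [b hb]. exists b; split; auto. intros x [].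
  - destruct IH as [al [h1 h2]].
    destruct (Htri x al) as [h|[h|h]].
    + exists al; split; auto. intros z [hz|hz]; subst; auto.
    + destruct (noMax al) as [b hb]. exists b. split. eapply Htr; eauto.
      intros z [hz|hz]; subst; auto. eapply Htr; eauto.
    + destruct (noMax x) as [b hb]. exists b. split.
      * eapply Htr; [eapply Htr; [exact h1|exact h]|exact hb].
      * intros z [hz|hz]; [subst; exact hb|].
        eapply Htr; [eapply Htr; [apply h2; exact hz| exact h] | exact hb].
Qed.

Lemma lt01 : lt (fin 0) (fin 2).
Proof. apply fin_mono; lia. Qed.
Lemma lt12 : lt (fin 1) (fin 2).
Proof. apply fin_mono; lia. Qed.
Lemma fin_neq : forall k m, k <> m -> fin k <> fin m.
Proof. intros k m h h'. apply h, fin_inj, h'. Qed.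

Definition pr (x y : K) : K :=
  e (existT _ (fin 2) (fun s : seg lt (fin 2) => if emi (proj1_sig s = fin 0) then x else y)).
Definition star : K := e (existT _ (fin 0) (fun _ : seg lt (fin 0) => fin 0)).

Lemma pr_inj : forall x y x' y', pr x y = pr x' y' -> x = x' /\ y = y'.
Proof.
  intros x y x' y' H. unfold pr in H. apply He in H. apply inj_pairT2 in H.
  pose proof (f_equal (fun h => h (exist _ (fin 0) lt01)) H) as H0.
  pose proof (f_equal (fun h => h (exist _ (fin 1) lt12)) H) as H1.
  cbn beta in H0, H1. cbn [proj1_sig] in H0, H1.
  destruct (emi (fin 0 = fin 0)) as [_|c]; [|congruence].
  destruct (emi (fin 1 = fin 0)) as [c|_]; [exfalso; apply (fin_neq 1 0); auto|].
  auto.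
Qed.

Lemma e_fst : forall a s a' s', e (existT _ a s) = e (existT _ a' s') -> a = a'.
Proof. intros a s a' s' H. apply He in H. exact (f_equal (@projT1 _ _) H). Qed.

Lemma pr_star : forall x y, pr x y <> star.
Proof. intros x y H. apply e_fst in H. apply (fin_neq 2 0); auto. Qed.

Definition inj (x : K) : K := pr x x.
Lemma inj_inj : forall x y, inj x = inj y -> x = y.
Proof. intros x y H. apply pr_inj in H. tauto. Qed.
Lemma inj_star : forall x, inj x <> star.
Proof. intros; apply pr_star. Qed.

Definition T1 : K := inj (fin 0).
Definition tagC : K := pr (fin 0) (fin 1).
Definition tagU : K := pr (fin 1) (fin 0).
Definition tagE : K := pr (fin 1) (fin 1).

Lemma f01 : fin 0 <> fin 1. Proof. apply fin_neq; lia. Qed.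
Lemma tagCU : tagC <> tagU. Proof. intro h. apply pr_inj in h. apply f01; tauto. Qed.
Lemma tagEC : tagE <> tagC. Proof. intro h. apply pr_inj in h. apply f01; intuition. Qed.
Lemma tagEU : tagE <> tagU. Proof. intro h. apply pr_inj in h. apply f01; intuition. Qed.

Definition L (v : K) (x : baire K) : Prop :=
  exists a (s : seg lt a -> K), e (existT _ a s) = v /\ a <> fin 2 /\ N s x.

Lemma L_pr : forall a b x, ~ L (pr a b) x.
Proof. intros a b x [a' [s' [h1 [h2 _]]]]. apply e_fst in h1. auto. Qed.

Fixpoint pos (l : list K) : K := match l with [] => star | x :: l => pr x (pos l) end.

Lemma pos_inj : forall l l', pos l = pos l' -> l = l'.
Proof.
  induction l as [|x l IH]; destruct l' as [|x' l']; simpl; intro H; auto.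
  - exfalso; apply (pr_star x' (pos l')); auto.
  - exfalso; apply (pr_star x (pos l)); auto.
  - apply pr_inj in H. destruct H as [h1 h2]. subst. f_equal; auto.
Qed.

Definition constraint (Cf : list K -> K) (x : baire K) (Ef : list K -> K) (u : list K) : Prop :=
  (Cf u = tagC /\ ((Ef (u ++ [fin 0]) = star /\ Ef u = T1) \/ (Ef (u ++ [fin 0]) <> star /\ Ef u = star)))
  \/ (Cf u = tagU /\ ((Ef u = star /\ forall i, Ef (u ++ [i]) = star) \/
        (exists i, Ef u = inj i /\ Ef (u ++ [i]) <> star /\ forall j, lt j i -> Ef (u ++ [j]) = star)))
  \/ (Cf u <> tagC /\ Cf u <> tagU /\ ((L (Cf u) x /\ Ef u = T1) \/ (~ L (Cf u) x /\ Ef u = star))).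

Definition valid Cf x Ef := forall u, constraint Cf x Ef u.

Definition active (Cf : list K -> K) (u v : list K) : Prop :=
  exists i, v = u ++ [i] /\ (Cf u = tagU \/ (Cf u = tagC /\ i = fin 0)).

Definition WF (Cf : list K -> K) : Prop := ~ exists g : nat -> list K, forall n, active Cf (g n) (g (S n)).

Definition good (Cf : list K -> K) (B : baire K -> Prop) : Prop :=
  WF Cf /\ forall x, exists Ef, valid Cf x Ef /\ (B x <-> Ef [] <> star).

Lemma T1_star : T1 <> star. Proof. apply inj_star. Qed.

Lemma local_det : forall Cf x E1 E2 u, valid Cf x E1 -> valid Cf x E2 -> E1 u <> E2 u ->
  exists v, active Cf u v /\ E1 v <> E2 v.
Proof.
  intros Cf x E1 E2 u V1 V2 Hne. apply NNPP; intro Hn.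
  assert (Hc : forall v, active Cf u v -> E1 v = E2 v).
  { intros v hv. apply NNPP; intro h. apply Hn; eauto. }
  apply Hne. clear Hn.
  pose proof tagCU as hCU.
  destruct (V1 u) as [[c1 [[a1 b1]|[a1 b1]]]|[[c1 [[a1 b1]|[i1 [a1 [b1 d1]]]]]|[c1 [c1' [[a1 b1]|[a1 b1]]]]]];
  destruct (V2 u) as [[c2 [[a2 b2]|[a2 b2]]]|[[c2 [[a2 b2]|[i2 [a2 [b2 d2]]]]]|[c2 [c2' [[a2 b2]|[a2 b2]]]]]];
  try congruence; try tauto.
  - rewrite Hc in a1; [congruence|]. exists (fin 0); split; auto.
  - rewrite Hc in a1; [congruence|]. exists (fin 0); split; auto.
  - exfalso. apply b2. rewrite <- Hc; [apply b1|]. exists i2; split; auto.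
  - exfalso. apply b1. rewrite Hc; [apply b2|]. exists i1; split; auto.
  - rewrite a1, a2. f_equal.
    assert (HC : forall j, E1 (u ++ [j]) = E2 (u ++ [j])) by (intro j; apply Hc; exists j; split; auto).
    destruct (Htri i1 i2) as [h|[h|h]]; auto.
    + exfalso. apply b1. rewrite HC. apply d2; auto.
    + exfalso. apply b2. rewrite <- HC. apply d1; auto.
Qed.

Section Uniq.
Variables (Cf : list K -> K) (x : baire K) (E1 E2 : list K -> K).
Hypotheses (V1 : valid Cf x E1) (V2 : valid Cf x E2).
Definition Sd := { u : list K | E1 u <> E2 u }.
Definition nextS (s : Sd) : Sd :=
  let c := constructive_indefinite_description _ (local_det Cf x E1 E2 (proj1_sig s) V1 V2 (proj2_sig s)) in
  exist _ (proj1_sig c) (proj2 (proj2_sig c)).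
Lemma nextS_act : forall s, active Cf (proj1_sig s) (proj1_sig (nextS s)).
Proof. intro s. unfold nextS. destruct (constructive_indefinite_description _ _) as [v [h1 h2]]. simpl. exact h1. Qed.
Lemma uniq : WF Cf -> forall u, E1 u = E2 u.
Proof.
  intros W u. apply NNPP; intro h.
  set (s0 := exist (fun u => E1 u <> E2 u) u h : Sd).
  set (seq := fix f (n : nat) : Sd := match n with 0 => s0 | S n => nextS (f n) end).
  apply W. exists (fun n => proj1_sig (seq n)). intro n. apply nextS_act.
Qed.
End Uniq.

Definition graft {A : Type} (r : A) (T : K -> list K -> A) (l : list K) : A :=
  match l with [] => r | i :: u => T i u end.

Lemma graft_WF : forall r T, (forall i, WF (T i)) -> WF (graft r T).
Proof.
  intros r T HT [g Hg].
  destruct (Hg 0) as [j [hj _]].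
  destruct (g 1) as [|i w0] eqn:E1.
  - destruct (g 0); discriminate.
  - assert (Hw : forall n, exists w, g (S n) = i :: w).
    { induction n. eauto. destruct IHn as [w hw]. destruct (Hg (S n)) as [j' [hj' _]].
      rewrite hj', hw. exists (w ++ [j']). reflexivity. }
    apply (HT i). exists (fun n => tl (g (S n))). intro n.
    destruct (Hw n) as [w hw]. destruct (Hw (S n)) as [w' hw'].
    destruct (Hg (S n)) as [k [hk hk']]. rewrite hw, hw' in *. simpl.
    exists k. simpl in hk. injection hk as hk. split; auto.
Qed.

Definition Tconst : list K -> K := fun _ => tagE.
Lemma Tconst_WF : WF Tconst.
Proof.
  intros [g Hg]. destruct (Hg 0) as [j [_ [h|[h _]]]]; unfold Tconst in h.
  apply tagEU; auto. apply tagEC; auto.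
Qed.
Lemma Tconst_valid : forall x, valid Tconst x (fun _ => star).
Proof.
  intros x u. right; right. unfold Tconst. split. apply tagEC. split. apply tagEU.
  right. split; auto. apply L_pr.
Qed.

Lemma graft_valid : forall r T er ET x, (forall i, valid (T i) x (ET i)) ->
  constraint (graft r T) x (graft er ET) [] -> valid (graft r T) x (graft er ET).
Proof.
  intros r T er ET x HT Hr u. destruct u as [|i w]; auto. exact (HT i w).
Qed.

Lemma union_root : forall (Es : K -> list K -> K) (B : Prop), (B <-> exists i, Es i [] <> star) ->
  exists er, ((er = star /\ forall i, Es i [] = star) \/
        (exists i, er = inj i /\ Es i [] <> star /\ forall j, lt j i -> Es j [] = star))
    /\ (B <-> er <> star).
Proof.
  intros Es B HB. destruct (classic (exists i, Es i [] <> star)) as [h|h].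
  - destruct (kmin _ h) as [m [hm hmin]]. exists (inj m). split.
    + right. exists m. split; auto. split; auto. intros j hj. apply NNPP; intro hn. exact (hmin j hn hj).
    + split; intros _. apply inj_star. apply HB; eauto.
  - exists star. split.
    + left. split; auto. intro i. apply NNPP; intro hn; apply h; eauto.
    + split; intro hb. exfalso. apply h. apply HB; auto. congruence.
Qed.

Lemma good_compl : forall Cf A, good Cf A -> good (graft tagC (fun i => if emi (i = fin 0) then Cf else Tconst)) (fun x => ~ A x).
Proof.
  intros Cf A [W HE]. split.
  - apply graft_WF. intro i. destruct (emi (i = fin 0)); auto using Tconst_WF.
  - intro x. destruct (HE x) as [Ef [V HA]].
    assert (Her : exists er, ((Ef [] = star /\ er = T1) \/ (Ef [] <> star /\ er = star)) /\ (~ A x <-> er <> star)).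
    { destruct (classic (Ef [] = star)) as [h|h].
      - exists T1. split; auto. split; intros _. apply T1_star. intro ha. apply HA in ha. auto.
      - exists star. split; auto. split; intro hb. exfalso; apply hb; apply HA; auto. congruence. }
    destruct Her as [er [Hc Hb]].
    exists (graft er (fun i => if emi (i = fin 0) then Ef else (fun _ => star))). split.
    + apply graft_valid.
      * intro i. destruct (emi (i = fin 0)); auto using Tconst_valid.
      * left. split; [reflexivity|]. cbn [graft app]. destruct (emi (fin 0 = fin 0)); [exact Hc|congruence].
    + exact Hb.
Qed.

Lemma good_union : forall (F : K -> baire K -> Prop) (Cfs : K -> list K -> K),
  (forall i, good (Cfs i) (F i)) -> good (graft tagU Cfs) (fun x => exists i, F i x).
Proof.
  intros F Cfs HG. split.
  - apply graft_WF. intro i. apply (HG i).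
  - intro x.
    assert (hE : forall i, exists Ef, valid (Cfs i) x Ef /\ (F i x <-> Ef [] <> star)) by (intro i; apply (HG i)).
    set (Es := fun i => proj1_sig (constructive_indefinite_description _ (hE i))).
    assert (HEs : forall i, valid (Cfs i) x (Es i) /\ (F i x <-> Es i [] <> star)).
    { intro i. unfold Es. destruct (constructive_indefinite_description _ _); auto. }
    destruct (union_root Es (exists i, F i x)) as [er [Hc Hb]].
    { split; intros [i hi]; exists i; apply (HEs i); auto. }
    exists (graft er Es). split; auto.
    apply graft_valid. intro i; apply HEs.
    right; left. split; auto.
Qed.

Definition lab (U : baire K -> Prop) (i : K) : K :=
  if emi (exists a (s : seg lt a -> K), e (existT _ a s) = i /\ a <> fin 2 /\ forall y, N s y -> U y) then i else tagE.

Lemma lab_not_tag : forall U i, lab U i <> tagC /\ lab U i <> tagU.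
Proof.
  intros U i. unfold lab. destruct (emi _) as [[a [s [h1 [h2 _]]]]|_].
  - subst i. split; intro h; apply e_fst in h; auto.
  - split; [apply tagEC|apply tagEU].
Qed.

Lemma L_lab : forall U i x, L (lab U i) x -> U x.
Proof.
  intros U i x. unfold lab. destruct (emi _) as [[a [s [h1 [h2 h3]]]]|_].
  - intros [a' [s' [h1' [h2' h3']]]]. rewrite <- h1 in h1'. apply He in h1'.
    injection h1' as ha. subst a'. apply inj_pairT2 in H. subst s'. auto.
  - intro h; exfalso; exact (L_pr _ _ _ h).
Qed.

Definition restr (y : baire K) (a : K) : seg lt a -> K := fun s => y (proj1_sig s).

Lemma open_good : forall U, kopen lt U -> good (graft tagU (fun i => graft (lab U i) (fun _ => Tconst))) U.
Proof.
  intros U HU. split.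
  - apply graft_WF. intro i. apply graft_WF. intros _. apply Tconst_WF.
  - intro x.
    assert (hE : forall i, exists Ef, valid (graft (lab U i) (fun _ => Tconst)) x Ef /\ (L (lab U i) x <-> Ef [] <> star)).
    { intro i. destruct (lab_not_tag U i) as [n1 n2].
      destruct (classic (L (lab U i) x)) as [h|h].
      - exists (graft T1 (fun _ _ => star)). split.
        + apply graft_valid. intros; apply Tconst_valid. right; right; simpl; auto.
        + simpl. split; auto. intros _; apply T1_star.
      - exists (graft star (fun _ _ => star)). split.
        + apply graft_valid. intros; apply Tconst_valid. right; right; simpl; auto.
        + simpl. split; intro; tauto. }
    set (Es := fun i => proj1_sig (constructive_indefinite_description _ (hE i))).
    assert (HEs : forall i, valid (graft (lab U i) (fun _ => Tconst)) x (Es i) /\ (L (lab U i) x <-> Es i [] <> star)).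
    { intro i. unfold Es. destruct (constructive_indefinite_description _ _); auto. }
    destruct (union_root Es (U x)) as [er [Hc Hb]].
    { split.
      - intro hx. destruct (HU x hx) as [a [s [hs hsU]]].
        destruct (bound_list a [fin 2]) as [a' [ha' ha2]].
        assert (ha'2 : a' <> fin 2).
        { intro h. subst a'. apply (Hirr (fin 2)). apply ha2. left; auto. }
        exists (e (existT _ a' (restr x a'))). apply (HEs _).
        assert (Hl : lab U (e (existT _ a' (restr x a'))) = e (existT _ a' (restr x a'))).
        { unfold lab. destruct (emi _) as [_|hn]; auto. exfalso. apply hn.
          exists a', (restr x a'). split; auto. split; auto.
          intros y hy. apply hsU. intros b hb. rewrite <- (hs b hb).
          rewrite (hy b (Htr _ _ _ hb ha')). reflexivity. }
        rewrite Hl. exists a', (restr x a'). split; auto. split; auto. intros b hb. reflexivity.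
      - intros [i hi]. apply (L_lab U i). apply (HEs i). auto. }
    exists (graft er Es). split; auto.
    apply graft_valid. intro i; apply HEs.
    right; left. split; auto.
Qed.

Lemma borel_good : forall B, kBorel lt B -> exists Cf, good Cf B.
Proof.
  intros B HB. induction HB as [U hU|A hA IH|F hF IH].
  - eexists; apply open_good; auto.
  - destruct IH as [Cf hC]. eexists; apply good_compl; eauto.
  - set (Cfs := fun i => proj1_sig (constructive_indefinite_description _ (IH i))).
    exists (graft tagU Cfs). apply good_union. intro i. unfold Cfs.
    destruct (constructive_indefinite_description _ _); auto.
Qed.

Lemma L_local : forall v, exists a, forall x x', (forall b, lt b a -> x' b = x b) -> (L v x' <-> L v x).
Proof.
  intro v. destruct (classic (exists a (s : seg lt a -> K), e (existT _ a s) = v)) as [[a [s hs]]|h].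
  - exists a. intros x x' hx. unfold L. split.
    + intros [a' [s' [h1 [h2 h3]]]]. exists a', s'. split; auto. split; auto.
      rewrite <- hs in h1. apply He in h1. injection h1 as ha. subst a'. apply inj_pairT2 in H. subst s'.
      intros b hb. rewrite <- hx; auto.
    + intros [a' [s' [h1 [h2 h3]]]]. exists a', s'. split; auto. split; auto.
      rewrite <- hs in h1. apply He in h1. injection h1 as ha. subst a'. apply inj_pairT2 in H. subst s'.
      intros b hb. rewrite hx; auto.
  - exists m0. intros x x' _. unfold L. split; intros [a [s [h1 _]]]; exfalso; apply h; eauto.
Qed.

Lemma constraint_fail : forall Cf x Ef u, ~ constraint Cf x Ef u ->
  exists a (S : list (list K)), forall Cf' x' Ef', Cf' u = Cf u -> Ef' u = Ef u ->
    (forall l, In l S -> Ef' l = Ef l) -> (forall b, lt b a -> x' b = x b) -> ~ constraint Cf' x' Ef' u.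
Proof.
  intros Cf x Ef u Hn. destruct (L_local (Cf u)) as [a Ha].
  pose proof tagCU as hCU.
  destruct (classic (Cf u = tagC)) as [hC|hC].
  - exists a, [u ++ [fin 0]]. intros Cf' x' Ef' e1 e2 e3 e4 Hc.
    assert (e5 : Ef' (u ++ [fin 0]) = Ef (u ++ [fin 0])) by (apply e3; left; auto).
    apply Hn. left. split; auto.
    destruct Hc as [[_ h]|[[h _]|[h [h' _]]]]; try congruence.
  - destruct (classic (Cf u = tagU)) as [hU|hU].
    + destruct (classic (Ef u = star)) as [hs|hs].
      * assert (hi : exists i, Ef (u ++ [i]) <> star).
        { apply NNPP; intro hh. apply Hn. right; left. split; auto. left. split; auto.
          intro i. apply NNPP; intro h'; apply hh; eauto. }
        destruct hi as [i hi]. exists a, [u ++ [i]]. intros Cf' x' Ef' e1 e2 e3 e4 Hc.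
        assert (e5 : Ef' (u ++ [i]) = Ef (u ++ [i])) by (apply e3; left; auto).
        destruct Hc as [[h _]|[[_ [[h1 h2]|[j [h1 _]]]]|[h [h' _]]]]; try congruence.
        all: first [ (apply (inj_star j); congruence) | (apply hi; rewrite <- e5; apply h2) ].
      * destruct (classic (exists i, Ef u = inj i)) as [[i hi]|hi].
        -- destruct (classic (Ef (u ++ [i]) = star)) as [hs2|hs2].
           ++ exists a, [u ++ [i]]. intros Cf' x' Ef' e1 e2 e3 e4 Hc.
              assert (e5 : Ef' (u ++ [i]) = Ef (u ++ [i])) by (apply e3; left; auto).
              destruct Hc as [[h _]|[[_ [[h1 h2]|[j [h1 [h2 _]]]]]|[h [h' _]]]]; try congruence.
              all: assert (j = i) by (apply inj_inj; congruence); subst j; congruence.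
           ++ assert (hj : exists j, lt j i /\ Ef (u ++ [j]) <> star).
              { apply NNPP; intro hh. apply Hn. right; left. split; auto. right. exists i.
                split; auto. split; auto. intros j hj. apply NNPP; intro h'; apply hh; eauto. }
              destruct hj as [j [hj1 hj2]]. exists a, [u ++ [j]]. intros Cf' x' Ef' e1 e2 e3 e4 Hc.
              assert (e5 : Ef' (u ++ [j]) = Ef (u ++ [j])) by (apply e3; left; auto).
              destruct Hc as [[h _]|[[_ [[h1 h2]|[j' [h1 [h2 h3]]]]]|[h [h' _]]]]; try congruence.
              all: assert (j' = i) by (apply inj_inj; congruence); subst j';
                apply hj2; rewrite <- e5; apply h3; auto.
        -- exists a, []. intros Cf' x' Ef' e1 e2 e3 e4 Hc.
           destruct Hc as [[h _]|[[_ [[h1 h2]|[j [h1 _]]]]|[h [h' _]]]]; try congruence.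
           all: apply hi; exists j; congruence.
    + exists a, []. intros Cf' x' Ef' e1 e2 e3 e4 Hc.
      destruct Hc as [[h _]|[[h _]|[_ [_ h]]]]; try congruence.
      apply Hn. right; right. split; auto. split; auto. rewrite e1, e2 in h.
      rewrite (Ha x x' e4) in h. exact h.
Qed.

Definition dec (v : K) : K * K := epsilon (inhabits (star, star)) (fun p => pr (fst p) (snd p) = v).
Lemma dec_pr : forall a b, dec (pr a b) = (a, b).
Proof.
  intros a b. unfold dec.
  pose proof (epsilon_spec (inhabits (star, star)) (fun p : K * K => pr (fst p) (snd p) = pr a b) (ex_intro _ (a,b) eq_refl)) as H.
  cbv beta in H. destruct (epsilon (inhabits (star, star)) (fun p : K * K => pr (fst p) (snd p) = pr a b)) as [p q]. simpl in H. apply pr_inj in H. destruct H; subst; reflexivity.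
Qed.
Definition cof (y : baire K) : baire K := fun b => fst (dec (y b)).
Definition eof (y : baire K) : baire K := fun b => snd (dec (y b)).

Definition toB (Ef : list K -> K) (d : K) (p : K) : K :=
  if emi (exists l, pos l = p) then Ef (epsilon (inhabits []) (fun l => pos l = p)) else d.
Lemma toB_pos : forall Ef d l, toB Ef d (pos l) = Ef l.
Proof.
  intros. unfold toB. destruct (emi _) as [h|h]; [|exfalso; apply h; eauto].
  f_equal. apply pos_inj. apply (epsilon_spec (inhabits []) (fun l' => pos l' = pos l)). auto.
Qed.
Lemma toB_npos : forall Ef d p, ~ (exists l, pos l = p) -> toB Ef d p = d.
Proof. intros. unfold toB. destruct (emi _); tauto. Qed.

Definition Pb (y : baire K) : Prop :=
  (forall b, exists p q, y b = pr p q) /\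
  valid (fun l => cof y (pos l)) (cof y) (fun l => eof y (pos l)) /\
  (forall p, ~ (exists l, pos l = p) -> eof y p = star) /\
  eof y (pos []) = star /\ WF (fun l => cof y (pos l)).

Definition agree (a : K) (y y' : baire K) : Prop := forall b, lt b a -> y b = y' b.
Definition fail (a : K) (y : baire K) : Prop := forall y', agree a y y' -> ~ Pb y'.

Lemma closed_crit : forall y, (exists a (S : list K), forall y', (forall b, lt b a -> y b = y' b) ->
   (forall p, In p S -> y p = y' p) -> ~ Pb y') -> exists al, fail al y.
Proof.
  intros y [a [S H]]. destruct (bound_list a S) as [al [h1 h2]]. exists al.
  intros y' hy. apply H.
  - intros b hb. apply hy. eapply Htr; eauto.
  - intros p hp. apply hy. auto.
Qed.

Lemma Pb_closed : forall y, ~ Pb y -> exists al, fail al y.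
Proof.
  intros y Hn. apply closed_crit. unfold Pb in Hn.
  destruct (classic (forall b, exists p q, y b = pr p q)) as [H1|H1].
  2:{ apply not_all_ex_not in H1. destruct H1 as [b hb]. exists m0, [b].
      intros y' _ hy [h' _]. apply hb. rewrite (hy b); [apply h'|left; auto]. }
  destruct (classic (valid (fun l => cof y (pos l)) (cof y) (fun l => eof y (pos l)))) as [H2|H2].
  2:{ apply not_all_ex_not in H2. destruct H2 as [u hu].
      destruct (constraint_fail _ _ _ _ hu) as [a [S hS]].
      exists a, (pos u :: map pos S). intros y' ha hp [_ [h' _]]. apply (hS (fun l => cof y' (pos l)) (cof y') (fun l => eof y' (pos l))).
      - unfold cof. rewrite (hp (pos u)); auto. left; auto.
      - unfold eof. rewrite (hp (pos u)); auto. left; auto.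
      - intros l hl. unfold eof. rewrite (hp (pos l)); auto. right. apply in_map; auto.
      - intros b hb. unfold cof. rewrite (ha b); auto.
      - apply h'. }
  destruct (classic (forall p, ~ (exists l, pos l = p) -> eof y p = star)) as [H3|H3].
  2:{ apply not_all_ex_not in H3. destruct H3 as [p hp].
      exists m0, [p]. intros y' _ hy [_ [_ [h' _]]]. apply hp. intro hn.
      unfold eof. rewrite (hy p); [apply h'; auto|left; auto]. }
  destruct (classic (eof y (pos []) = star)) as [H4|H4].
  2:{ exists m0, [pos []]. intros y' _ hy [_ [_ [_ [h' _]]]]. apply H4.
      unfold eof. rewrite (hy (pos [])); [apply h'|left; auto]. }
  assert (H5 : ~ WF (fun l => cof y (pos l))) by tauto.
  unfold WF in H5. apply NNPP in H5. destruct H5 as [g hg].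
  destruct (cof_omega (fun n => pos (g n))) as [a ha].
  exists a, []. intros y' hy _ [_ [_ [_ [_ h']]]]. apply h'. exists g. intro n.
  destruct (hg n) as [i [hi1 hi2]]. exists i. split; auto.
  unfold cof. rewrite <- (hy (pos (g n))); auto.
Qed.

Lemma fail_agree : forall g y y', agree g y y' -> fail g y -> fail g y'.
Proof.
  intros g y y' ha hf y'' h2. apply hf. intros b hb. rewrite ha; auto.
Qed.
Lemma fail_mono : forall g g' y, fail g y -> lt g g' -> fail g' y.
Proof. intros g g' y hf hg y' ha. apply hf. intros b hb. apply ha. eapply Htr; eauto. Qed.
Lemma fail_notP : forall g y, fail g y -> ~ Pb y.
Proof. intros g y hf. apply hf. intros b _; auto. Qed.

Definition out (y : baire K) : baire K := fun b =>
  if emi (exists g, le g b /\ fail g y) then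
    (if emi (exists g, lt g b /\ fail g y) then e (existT _ b (restr y b)) else star)
  else inj (cof y b).

Definition causal (f : baire K -> baire K) : Prop :=
  forall y y' b, (forall g, le g b -> y g = y' g) -> f y b = f y' b.

Lemma causal_cont : forall f, causal f -> kcontinuous lt f.
Proof.
  intros f hf U HU x hx. destruct (HU (f x) hx) as [a [s [hs hsU]]].
  exists a, (restr x a). split.
  - intros b hb. reflexivity.
  - intros y hy. apply hsU. intros b hb. rewrite <- (hs b hb). apply hf.
    intros g hg. assert (hga : lt g a) by (destruct hg; [eapply Htr; eauto | subst; auto]).
    rewrite (hy g hga). reflexivity.
Qed.

Lemma out_causal : causal out.
Proof.
  intros y y' b hyy. unfold out.
  assert (hag : forall g, le g b -> agree g y y') by (intros g hg c hc; apply hyy; left; destruct hg; [eapply Htr; eauto|subst; auto]).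
  assert (hag' : forall g, le g b -> agree g y' y) by (intros g hg c hc; symmetry; apply (hag g hg); auto).
  assert (E1 : (exists g, le g b /\ fail g y) <-> (exists g, le g b /\ fail g y')).
  { split; intros [g [h1 h2]]; exists g; split; auto; eapply fail_agree; eauto. }
  assert (E2 : (exists g, lt g b /\ fail g y) <-> (exists g, lt g b /\ fail g y')).
  { split; intros [g [h1 h2]]; exists g; split; auto; eapply fail_agree; eauto; [apply hag|apply hag']; left; auto. }
  assert (E3 : restr y b = restr y' b).
  { extensionality t. unfold restr. apply hyy. left. apply (proj2_sig t). }
  assert (E4 : cof y b = cof y' b) by (unfold cof; rewrite hyy; auto; right; auto).
  destruct (emi (exists g, le g b /\ fail g y)) as [a1|a1];
  destruct (emi (exists g, le g b /\ fail g y')) as [a2|a2]; try tauto.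
  - destruct (emi (exists g, lt g b /\ fail g y)) as [b1|b1];
    destruct (emi (exists g, lt g b /\ fail g y')) as [b2|b2]; try tauto.
    rewrite E3; auto.
  - rewrite E4; auto.
Qed.

Lemma inj_causal : causal (fun c b => inj (c b)).
Proof. intros y y' b h. rewrite h; auto. right; auto. Qed.

Lemma first_fail : forall y, (exists g, fail g y) -> exists a, fail a y /\ forall g, fail g y -> ~ lt g a.
Proof. intros y h. apply kmin; auto. Qed.

Lemma out_at_first : forall y a, fail a y -> (forall g, fail g y -> ~ lt g a) -> out y a = star.
Proof.
  intros y a h1 h2. unfold out.
  destruct (emi _) as [_|n]; [|exfalso; apply n; exists a; split; auto; right; auto].
  destruct (emi _) as [[g [hg1 hg2]]|_]; auto. exfalso; exact (h2 g hg2 hg1).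
Qed.

Lemma out_before : forall y a b, (forall g, fail g y -> ~ lt g a) -> lt b a -> out y b = inj (cof y b).
Proof.
  intros y a b h hb. unfold out.
  destruct (emi _) as [[g [hg1 hg2]]|_]; auto. exfalso. apply (h g hg2).
  destruct hg1; [eapply Htr; eauto|subst; auto].
Qed.

Lemma out_nofail : forall y, (forall g, ~ fail g y) -> forall b, out y b = inj (cof y b).
Proof.
  intros y h b. unfold out. destruct (emi _) as [[g [_ hg]]|_]; auto. exfalso; exact (h g hg).
Qed.

Lemma Pb_shape : forall y, Pb y -> forall b, y b = pr (cof y b) (eof y b).
Proof.
  intros y [h _] b. destruct (h b) as [p [q hpq]]. unfold cof, eof. rewrite hpq, dec_pr. reflexivity.
Qed.

Lemma out_inj : forall y y', out y = out y' -> y = y'.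
Proof.
  intros y y' H.
  destruct (classic (exists g, fail g y)) as [hy|hy]; destruct (classic (exists g, fail g y')) as [hy'|hy'].
  - destruct (first_fail y hy) as [a [ha1 ha2]]. destruct (first_fail y' hy') as [a' [ha1' ha2']].
    assert (a = a').
    { destruct (Htri a a') as [h|[h|h]]; auto.
      - exfalso. pose proof (f_equal (fun w => w a) H) as Ha. cbv beta in Ha.
        rewrite (out_at_first y a ha1 ha2), (out_before y' a' a ha2' h) in Ha. apply (inj_star _ (eq_sym Ha)).
      - exfalso. pose proof (f_equal (fun w => w a') H) as Ha. cbv beta in Ha.
        rewrite (out_at_first y' a' ha1' ha2'), (out_before y a a' ha2 h) in Ha. apply (inj_star _ Ha). }
    subst a'. extensionality g. destruct (bound_list g [a]) as [b [hb1 hb2]].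
    assert (hab : lt a b) by (apply hb2; left; auto).
    pose proof (f_equal (fun w => w b) H) as Hb. cbv beta in Hb. unfold out in Hb.
    destruct (emi (exists g0, le g0 b /\ fail g0 y)) as [_|n]; [|exfalso; apply n; exists a; split; [left|]; auto].
    destruct (emi (exists g0, le g0 b /\ fail g0 y')) as [_|n]; [|exfalso; apply n; exists a; split; [left|]; auto].
    destruct (emi (exists g0, lt g0 b /\ fail g0 y)) as [_|n]; [|exfalso; apply n; exists a; split; auto].
    destruct (emi (exists g0, lt g0 b /\ fail g0 y')) as [_|n]; [|exfalso; apply n; exists a; split; auto].
    apply He in Hb. apply inj_pairT2 in Hb.
    exact (f_equal (fun h => h (exist _ g hb1)) Hb).
  - exfalso. destruct (first_fail y hy) as [a [ha1 ha2]].
    pose proof (f_equal (fun w => w a) H) as Ha. cbv beta in Ha.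
    rewrite (out_at_first y a ha1 ha2), out_nofail in Ha. apply (inj_star _ (eq_sym Ha)).
    intros g hg; apply hy'; eauto.
  - exfalso. destruct (first_fail y' hy') as [a [ha1 ha2]].
    pose proof (f_equal (fun w => w a) H) as Ha. cbv beta in Ha.
    rewrite (out_at_first y' a ha1 ha2), out_nofail in Ha. apply (inj_star _ Ha).
    intros g hg; apply hy; eauto.
  - assert (nf : forall g, ~ fail g y) by (intros g hg; apply hy; eauto).
    assert (nf' : forall g, ~ fail g y') by (intros g hg; apply hy'; eauto).
    assert (P1 : Pb y) by (apply NNPP; intro n; destruct (Pb_closed y n) as [al hal]; exact (nf al hal)).
    assert (P2 : Pb y') by (apply NNPP; intro n; destruct (Pb_closed y' n) as [al hal]; exact (nf' al hal)).
    assert (Hc : cof y = cof y').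
    { extensionality b. apply inj_inj. rewrite <- (out_nofail y nf), <- (out_nofail y' nf'), H. auto. }
    assert (He' : eof y = eof y').
    { extensionality b. destruct (classic (exists l, pos l = b)) as [[l hl]|hl].
      - subst b. destruct P1 as [_ [V1 [_ [_ W1]]]]. destruct P2 as [_ [V2 [_ [_ W2]]]].
        rewrite <- Hc in V2.
        exact (uniq (fun l => cof y (pos l)) (cof y) (fun l => eof y (pos l)) (fun l => eof y' (pos l)) V1 V2 W1 l).
      - rewrite (proj1 (proj2 (proj2 P1)) b hl), (proj1 (proj2 (proj2 P2)) b hl). auto. }
    extensionality b. rewrite (Pb_shape y P1 b), (Pb_shape y' P2 b), Hc, He'. auto.
Qed.

Definition Dset (c : baire K) : Prop :=
  exists Ef, valid (fun l => c (pos l)) c Ef /\ Ef [] = star /\ WF (fun l => c (pos l)).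

Lemma range_iff : forall c, (exists y, out y = (fun b => inj (c b))) <-> Dset c.
Proof.
  intro c. split.
  - intros [y hy].
    assert (nf : forall g, ~ fail g y).
    { intros g hg. destruct (first_fail y (ex_intro _ g hg)) as [a [ha1 ha2]].
      pose proof (f_equal (fun w => w a) hy) as Ha. cbv beta in Ha.
      rewrite (out_at_first y a ha1 ha2) in Ha. apply (inj_star _ (eq_sym Ha)). }
    assert (P1 : Pb y) by (apply NNPP; intro n; destruct (Pb_closed y n) as [al hal]; exact (nf al hal)).
    assert (Hc : cof y = c).
    { extensionality b. apply inj_inj. rewrite <- (out_nofail y nf), hy. auto. }
    destruct P1 as [_ [V [_ [R W]]]]. rewrite Hc in V, W.
    exists (fun l => eof y (pos l)). auto.
  - intros [Ef [V [R W]]].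
    set (y := fun b => pr (c b) (toB Ef star b)).
    assert (Hc : cof y = c) by (extensionality b; unfold cof, y; rewrite dec_pr; auto).
    assert (HE : eof y = toB Ef star) by (extensionality b; unfold eof, y; rewrite dec_pr; auto).
    assert (HEf : (fun l => eof y (pos l)) = Ef) by (extensionality l; rewrite HE; apply toB_pos).
    assert (P1 : Pb y).
    { unfold Pb. rewrite Hc, HEf. split; [intro b; unfold y; eauto|]. split; auto. split.
      - intros p hp. rewrite HE. apply toB_npos; auto.
      - split; auto. rewrite HE, toB_pos. auto. }
    exists y. extensionality b. rewrite out_nofail. rewrite Hc; auto.
    intros g hg. exact (fail_notP g y hg P1).
Qed.

Lemma preimage : forall B f, kBorel lt B -> kcontinuous lt f -> kBorel lt (fun x => B (f x)).
Proof.
  intros B f HB Hf. induction HB as [U hU|A hA IH|F hF IH].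
  - apply kBorel_open. apply Hf. auto.
  - apply (kBorel_compl IH).
  - apply (kBorel_union (fun i x => F i (f x))). auto.
Qed.

Definition toBc (Cf : list K -> K) : baire K := toB Cf tagE.

Lemma D_not_borel : forall Q, (forall c, Q c <-> Dset c) -> ~ kBorel lt Q.
Proof.
  intros Q HQ HB. destruct (borel_good Q HB) as [Cf [W HE]].
  set (d := toBc Cf).
  assert (Hd : (fun l => d (pos l)) = Cf) by (extensionality l; unfold d, toBc; apply toB_pos).
  destruct (HE d) as [Ef [V HQd]].
  destruct (classic (Q d)) as [h|h].
  - pose proof h as h'. apply HQ in h'. destruct h' as [Ef' [V' [R' W']]].
    rewrite Hd in V', W'.
    pose proof (uniq Cf d Ef Ef' V V' W []) as hu. apply HQd in h. congruence.
  - apply h. apply HQ. exists Ef. rewrite Hd. split; auto. split; auto.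
    apply NNPP; intro hn. apply h. apply HQd. auto.
Qed.

Theorem main_result : exists f : baire K -> baire K,
    kcontinuous lt f /\ (forall x y, f x = f y -> x = y) /\ ~ kBorel lt (fun y => exists x, f x = y).
Proof.
  exists out. split; [apply causal_cont, out_causal|]. split; [exact out_inj|].
  intro HB. apply (D_not_borel (fun c => exists x, out x = (fun b => inj (c b)))).
  - exact range_iff.
  - exact (preimage _ (fun c b => inj (c b)) HB (causal_cont _ inj_causal)).
Qed.

End Main.

Theorem corollary1p9 (K : Type) (lt : K -> K -> Prop) :
  is_cardinal lt -> uncountable K -> kappa_lt_kappa_eq_kappa lt ->
  exists f : baire K -> baire K,
    kcontinuous lt f /\
    (forall x y, f x = f y -> x = y) /\
    ~ kBorel lt (fun y => exists x, f x = y).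
Proof.
  intros [[Hirr [Htr [Htri Hwf]]] Hcard] Hunc [e He].
  exact (main_result K lt Hirr Htr Htri Hwf Hcard Hunc e He).
Qed.
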